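(* Let $\mathcal L>0$, $m_\pm>0$, $\rho_\pm>0$, $S_+<0<S_-$, $S_I\in\mathbb R$, $\lambda_\pm=\sqrt{\rho_\pm/m_\pm}$, and define \[ \mathcal H_1^{\rm p}(q_1,q_2)=\tfrac12\Big(-\tfrac{S_+}{\rho_+}m_+\lambda_+\tanh\big(\lambda_+\tfrac{q_2-q_1}{2}\big)-\tfrac{S_-}{\rho_-}m_-\lambda_-\tanh(\lambda_-q_1)-S_I\Big), \] \[ \mathcal H_2^{\rm p}(q_1,q_2)=\tfrac12\Big(\tfrac{S_+}{\rho_+}m_+\lambda_+\tanh\big(\lambda_+\tfrac{q_2-q_1}{2}\big)+\tfrac{S_-}{\rho_-}m_-\lambda_-\tanh(\lambda_-(\mathcal L-q_2))+S_I\Big). \] Then the ODE system $\dot q_1=\mathcal H_1^{\rm p}(q_1,q_2)$, $\dot q_2=\mathcal H_2^{\rm p}(q_1,q_2)$ is the gradient flow of the function \[ \mathcal E(q_1,q_2)=\frac{\frac{S_-}{\rho_-}m_-}{2}\ln\cosh(\lambda_-q_1)+\frac{\frac{S_-}{\rho_-}m_-}{2}\ln\cosh(\lambda_-(\mathcal L-q_2))-\frac{S_+}{\rho_+}m_+\ln\cosh\Big(\lambda_+\frac{q_2-q_1}{2}\Big)+\frac12S_I(q_1-q_2), \] i.e. $(\mathcal H_1^{\rm p},\mathcal H_2^{\rm p})=-\nabla\mathcal E$, and $\mathcal E$ is a strictly convex Lyapunov function for the system. *)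

(* Defs.v *)
From Stdlib Require Import Reals Lra.
From Coquelicot Require Import Coquelicot.
Open Scope R_scope.

Definition lam (rho m : R) : R := sqrt (rho / m).

Definition H1p (L mp mm rhop rhom Sp Sm SI : R) (q1 q2 : R) : R :=
  / 2 * ( - (Sp / rhop) * mp * lam rhop mp * tanh (lam rhop mp * ((q2 - q1) / 2))
          - (Sm / rhom) * mm * lam rhom mm * tanh (lam rhom mm * q1)
          - SI ).

Definition H2p (L mp mm rhop rhom Sp Sm SI : R) (q1 q2 : R) : R :=
  / 2 * ( (Sp / rhop) * mp * lam rhop mp * tanh (lam rhop mp * ((q2 - q1) / 2))
          + (Sm / rhom) * mm * lam rhom mm * tanh (lam rhom mm * (L - q2))
          + SI ).

Definition Ep (L mp mm rhop rhom Sp Sm SI : R) (q1 q2 : R) : R :=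
  (Sm / rhom * mm) / 2 * ln (cosh (lam rhom mm * q1))
  + (Sm / rhom * mm) / 2 * ln (cosh (lam rhom mm * (L - q2)))
  - (Sp / rhop) * mp * ln (cosh (lam rhop mp * ((q2 - q1) / 2)))
  + / 2 * SI * (q1 - q2).

Definition strictly_convex2 (f : R -> R -> R) : Prop :=
  forall (x1 x2 y1 y2 t : R), (x1, x2) <> (y1, y2) -> 0 < t < 1 ->
    f (t * x1 + (1 - t) * y1) (t * x2 + (1 - t) * y2)
      < t * f x1 x2 + (1 - t) * f y1 y2.

(* Main.v *)
Require Import Defs.
From Stdlib Require Import Reals Lra Psatz.
From Coquelicot Require Import Coquelicot.
Open Scope R_scope.

Lemma cosh_pos' x : 0 < cosh x.
Proof. unfold cosh. generalize (exp_pos x) (exp_pos (-x)). lra. Qed.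

Lemma D_gen (u : R -> R) t du c :
  is_derive u t du ->
  is_derive (fun t => c * ln (cosh (u t))) t (c * (tanh (u t) * du)).
Proof.
  intros Hu. apply is_derive_scal.
  assert (H : is_derive (fun y => ln (cosh y)) (u t) (tanh (u t))).
  { apply is_derive_Reals.
    replace (tanh (u t)) with (/ cosh (u t) * sinh (u t)).
    2:{ unfold tanh. field. apply Rgt_not_eq, cosh_pos'. }
    apply (derivable_pt_lim_comp cosh ln). apply derivable_pt_lim_cosh.
    apply derivable_pt_lim_ln, cosh_pos'. }
  generalize (is_derive_comp (fun y => ln (cosh y)) u t _ _ H Hu).
  intro H2. simpl in H2. unfold scal in H2; simpl in H2. unfold mult in H2; simpl in H2.
  rewrite Rmult_comm. exact H2.
Qed.

Lemma tanh_incr x y : x < y -> tanh x < tanh y.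
Proof.
  intros H. unfold tanh.
  assert (Cx := cosh_pos' x). assert (Cy := cosh_pos' y).
  assert (K : sinh x * cosh y < sinh y * cosh x).
  { unfold sinh, cosh.
    assert (E1 : exp x * exp (- y) = exp (x - y)) by (rewrite <- exp_plus; f_equal; ring).
    assert (E2 : exp (- x) * exp y = exp (y - x)) by (rewrite <- exp_plus; f_equal; ring).
    assert (exp (x - y) < exp (y - x)) by (apply exp_increasing; lra).
    nra. }
  apply (Rmult_lt_reg_r (cosh x * cosh y)). nra.
  replace (sinh x / cosh x * (cosh x * cosh y)) with (sinh x * cosh y) by (field; lra).
  replace (sinh y / cosh y * (cosh x * cosh y)) with (sinh y * cosh x) by (field; lra).
  exact K.
Qed.

Lemma mvt_lt f df a b : (forall x, is_derive f x (df x)) -> a < b ->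
  exists c, a < c < b /\ f b - f a = df c * (b - a).
Proof.
  intros Hd Hab.
  destruct (MVT_cor2 f df a b Hab) as [c [E Hc]].
  - intros c _. apply is_derive_Reals, Hd.
  - exists c; auto.
Qed.

Lemma sc_lt f df : (forall x, is_derive f x (df x)) -> (forall x y, x < y -> df x < df y) ->
  forall x y t, x < y -> 0 < t < 1 -> f (t * x + (1 - t) * y) < t * f x + (1 - t) * f y.
Proof.
  intros Hd Hm x y t Hxy Ht.
  set (z := t * x + (1 - t) * y).
  assert (Hz1 : x < z) by (unfold z; nra).
  assert (Hz2 : z < y) by (unfold z; nra).
  destruct (mvt_lt f df x z Hd Hz1) as [c1 [Hc1 E1]].
  destruct (mvt_lt f df z y Hd Hz2) as [c2 [Hc2 E2]].
  assert (Hc : df c1 < df c2) by (apply Hm; lra).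
  assert (Zx : z - x = (1 - t) * (y - x)) by (unfold z; ring).
  assert (Zy : y - z = t * (y - x)) by (unfold z; ring).
  rewrite Zx in E1. rewrite Zy in E2.
  assert (P : 0 < t * (1 - t) * (y - x)) by (apply Rmult_lt_0_compat; nra).
  assert (t * (f z - f x) < (1 - t) * (f y - f z)).
  { rewrite E1, E2.
    replace (t * (df c1 * ((1 - t) * (y - x)))) with (df c1 * (t * (1 - t) * (y - x))) by ring.
    replace ((1 - t) * (df c2 * (t * (y - x)))) with (df c2 * (t * (1 - t) * (y - x))) by ring.
    apply Rmult_lt_compat_r; auto. }
  lra.
Qed.

Lemma sc_neq f df : (forall x, is_derive f x (df x)) -> (forall x y, x < y -> df x < df y) ->
  forall x y t, x <> y -> 0 < t < 1 -> f (t * x + (1 - t) * y) < t * f x + (1 - t) * f y.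
Proof.
  intros Hd Hm x y t Hxy Ht.
  destruct (Rlt_or_le x y) as [H|H].
  - apply (sc_lt f df); auto.
  - assert (H' : y < x) by lra.
    generalize (sc_lt f df Hd Hm y x (1 - t) H' ltac:(lra)).
    replace ((1 - t) * y + (1 - (1 - t)) * x) with (t * x + (1 - t) * y) by ring.
    lra.
Qed.

Lemma lc_sc x y t : x <> y -> 0 < t < 1 ->
  ln (cosh (t * x + (1 - t) * y)) < t * ln (cosh x) + (1 - t) * ln (cosh y).
Proof.
  apply (sc_neq (fun x => ln (cosh x)) tanh).
  - intro z. generalize (D_gen (fun x => x) z 1 1 (is_derive_id z)).
    intro H. replace (tanh z) with (1 * (tanh z * 1)) by ring.
    revert H; apply is_derive_ext; intro; simpl; ring.
  - exact tanh_incr.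
Qed.

Lemma aff u t du a b : is_derive u t du -> is_derive (fun s => a * u s + b) t (a * du).
Proof.
  intro H. assert (H1 := is_derive_scal u t a du H).
  assert (H2 := is_derive_plus _ _ t _ _ H1 (is_derive_const b t)).
  replace (a * du) with (plus (a * du) (zero : R)) by (simpl; unfold plus, zero; simpl; ring).
  exact H2.
Qed.

Lemma sub_d u v t du dv : is_derive u t du -> is_derive v t dv ->
  is_derive (fun s => v s - u s) t (dv - du).
Proof. intros Hu Hv. exact (is_derive_minus _ _ t _ _ Hv Hu). Qed.

Lemma plus_d u v t du dv : is_derive u t du -> is_derive v t dv ->
  is_derive (fun s => u s + v s) t (du + dv).
Proof. intros Hu Hv. exact (is_derive_plus _ _ t _ _ Hu Hv). Qed.

Lemma minus_d u v t du dv : is_derive u t du -> is_derive v t dv ->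
  is_derive (fun s => u s - v s) t (du - dv).
Proof. intros Hu Hv. exact (is_derive_minus _ _ t _ _ Hu Hv). Qed.

Lemma Ep_traj L mp mm rhop rhom Sp Sm SI u v t du dv :
  rhom <> 0 -> rhop <> 0 ->
  is_derive u t du -> is_derive v t dv ->
  is_derive (fun s => Ep L mp mm rhop rhom Sp Sm SI (u s) (v s)) t
    (- H1p L mp mm rhop rhom Sp Sm SI (u t) (v t) * du
     - H2p L mp mm rhop rhom Sp Sm SI (u t) (v t) * dv).
Proof.
  intros Hrm Hrp Hu Hv. unfold Ep, H1p, H2p.
  set (lm := lam rhom mm). set (lp := lam rhop mp).
  assert (A1 := aff u t du lm 0 Hu).
  assert (A2 := aff v t dv (- lm) (lm * L) Hv).
  assert (A3 := aff _ t _ (lp / 2) 0 (sub_d u v t du dv Hu Hv)).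
  assert (P1 := D_gen _ t _ (Sm / rhom * mm / 2) A1).
  assert (P2 := D_gen _ t _ (Sm / rhom * mm / 2) A2).
  assert (P3 := D_gen _ t _ (Sp / rhop * mp) A3).
  assert (P4 := aff (fun s => u s - v s) t (du - dv) (/2 * SI) 0 (minus_d u v t du dv Hu Hv)).
  assert (Q := plus_d _ _ t _ _ (minus_d _ _ t _ _ (plus_d _ _ t _ _ P1 P2) P3) P4).
  eapply is_derive_ext; [|replace (- _ * du - _ * dv) with
     (Sm / rhom * mm / 2 * (tanh (lm * u t + 0) * (lm * du)) +
       Sm / rhom * mm / 2 * (tanh (- lm * v t + lm * L) * (- lm * dv)) -
       Sp / rhop * mp * (tanh (lp / 2 * (v t - u t) + 0) * (lp / 2 * (dv - du))) +
       / 2 * SI * (du - dv)); [exact Q|]].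
  - intro s. simpl. repeat rewrite Rplus_0_r.
    replace (- lm * v s + lm * L) with (lm * (L - v s)) by ring.
    replace (lp / 2 * (v s - u s)) with (lp * ((v s - u s) / 2)) by field.
    ring.
  - rewrite !Rplus_0_r.
    replace (- lm * v t + lm * L) with (lm * (L - v t)) by ring.
    replace (lp / 2 * (v t - u t)) with (lp * ((v t - u t) / 2)) by field.
    field. auto.
Qed.

Lemma lc_c x y t : 0 < t < 1 ->
  ln (cosh (t * x + (1 - t) * y)) <= t * ln (cosh x) + (1 - t) * ln (cosh y).
Proof.
  intro Ht. destruct (Req_dec x y) as [->|H].
  - replace (t * y + (1 - t) * y) with y by ring. lra.
  - left; apply lc_sc; auto.
Qed.

Lemma lam_pos r m : 0 < r -> 0 < m -> 0 < lam r m.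
Proof. intros; unfold lam; apply sqrt_lt_R0; apply Rdiv_lt_0_compat; auto. Qed.

Theorem proposition4p2 (L mp mm rhop rhom Sp Sm SI : R)
  (hL : 0 < L) (hmp : 0 < mp) (hmm : 0 < mm) (hrp : 0 < rhop) (hrm : 0 < rhom)
  (hSp : Sp < 0) (hSm : 0 < Sm) :
  (* (H1p, H2p) = - grad E *)
  (forall q1 q2 : R,
      is_derive (fun x => Ep L mp mm rhop rhom Sp Sm SI x q2) q1
                (- H1p L mp mm rhop rhom Sp Sm SI q1 q2)
   /\ is_derive (fun y => Ep L mp mm rhop rhom Sp Sm SI q1 y) q2
                (- H2p L mp mm rhop rhom Sp Sm SI q1 q2))
  (* E is strictly convex *)
  /\ strictly_convex2 (Ep L mp mm rhop rhom Sp Sm SI)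
  (* E is a Lyapunov function: nonincreasing along every solution *)
  /\ (forall q1 q2 : R -> R,
        (forall t, is_derive q1 t (H1p L mp mm rhop rhom Sp Sm SI (q1 t) (q2 t))) ->
        (forall t, is_derive q2 t (H2p L mp mm rhop rhom Sp Sm SI (q1 t) (q2 t))) ->
        forall s t, s <= t ->
          Ep L mp mm rhop rhom Sp Sm SI (q1 t) (q2 t)
            <= Ep L mp mm rhop rhom Sp Sm SI (q1 s) (q2 s)).
Proof.
  assert (Hrm : rhom <> 0) by lra. assert (Hrp : rhop <> 0) by lra.
  split; [|split].
  - intros q1 q2. split.
    + assert (H := Ep_traj L mp mm rhop rhom Sp Sm SI (fun x => x) (fun _ => q2) q1 1 0
                    Hrm Hrp (is_derive_id q1) (is_derive_const q2 q1)).
      simpl in H. replace (- H1p L mp mm rhop rhom Sp Sm SI q1 q2) with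
        (- H1p L mp mm rhop rhom Sp Sm SI q1 q2 * 1 - H2p L mp mm rhop rhom Sp Sm SI q1 q2 * 0) by ring.
      exact H.
    + assert (H := Ep_traj L mp mm rhop rhom Sp Sm SI (fun _ => q1) (fun x => x) q2 0 1
                    Hrm Hrp (is_derive_const q1 q2) (is_derive_id q2)).
      simpl in H. replace (- H2p L mp mm rhop rhom Sp Sm SI q1 q2) with
        (- H1p L mp mm rhop rhom Sp Sm SI q1 q2 * 0 - H2p L mp mm rhop rhom Sp Sm SI q1 q2 * 1) by ring.
      exact H.
  - intros x1 x2 y1 y2 t Hne Ht. unfold Ep.
    set (lm := lam rhom mm). set (lp := lam rhop mp).
    assert (Plm : 0 < lm) by (apply lam_pos; auto).
    assert (Plp : 0 < lp) by (apply lam_pos; auto).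
    set (A := Sm / rhom * mm / 2).
    assert (PA : 0 < A) by (unfold A; apply Rdiv_lt_0_compat; [apply Rmult_lt_0_compat; [apply Rdiv_lt_0_compat|]|]; lra).
    set (B := - (Sp / rhop) * mp).
    assert (PB : 0 < B) by (unfold B; apply Rmult_lt_0_compat; [|lra];
       replace (- (Sp / rhop)) with ((- Sp) / rhop) by (field; lra); apply Rdiv_lt_0_compat; lra).
    replace (lm * (t * x1 + (1 - t) * y1)) with (t * (lm * x1) + (1 - t) * (lm * y1)) by ring.
    replace (lm * (L - (t * x2 + (1 - t) * y2))) with (t * (lm * (L - x2)) + (1 - t) * (lm * (L - y2))) by ring.
    replace (lp * ((t * x2 + (1 - t) * y2 - (t * x1 + (1 - t) * y1)) / 2))
      with (t * (lp * ((x2 - x1) / 2)) + (1 - t) * (lp * ((y2 - y1) / 2))) by field.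
    assert (C1 := lc_c (lm * x1) (lm * y1) t Ht).
    assert (C2 := lc_c (lm * (L - x2)) (lm * (L - y2)) t Ht).
    assert (C3 := lc_c (lp * ((x2 - x1) / 2)) (lp * ((y2 - y1) / 2)) t Ht).
    assert (D3 : B * ln (cosh (t * (lp * ((x2 - x1) / 2)) + (1 - t) * (lp * ((y2 - y1) / 2))))
       <= t * (B * ln (cosh (lp * ((x2 - x1) / 2)))) + (1 - t) * (B * ln (cosh (lp * ((y2 - y1) / 2))))).
    { replace (t * (B * ln (cosh (lp * ((x2 - x1) / 2)))) + (1 - t) * (B * ln (cosh (lp * ((y2 - y1) / 2)))))
        with (B * (t * ln (cosh (lp * ((x2 - x1) / 2))) + (1 - t) * ln (cosh (lp * ((y2 - y1) / 2))))) by ring.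
      apply Rmult_le_compat_l; lra. }
    assert (D1 : A * ln (cosh (t * (lm * x1) + (1 - t) * (lm * y1)))
       <= t * (A * ln (cosh (lm * x1))) + (1 - t) * (A * ln (cosh (lm * y1)))).
    { replace (t * (A * ln (cosh (lm * x1))) + (1 - t) * (A * ln (cosh (lm * y1))))
        with (A * (t * ln (cosh (lm * x1)) + (1 - t) * ln (cosh (lm * y1)))) by ring.
      apply Rmult_le_compat_l; lra. }
    assert (D2 : A * ln (cosh (t * (lm * (L - x2)) + (1 - t) * (lm * (L - y2))))
       <= t * (A * ln (cosh (lm * (L - x2)))) + (1 - t) * (A * ln (cosh (lm * (L - y2))))).
    { replace (t * (A * ln (cosh (lm * (L - x2)))) + (1 - t) * (A * ln (cosh (lm * (L - y2)))))
        with (A * (t * ln (cosh (lm * (L - x2))) + (1 - t) * ln (cosh (lm * (L - y2))))) by ring.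
      apply Rmult_le_compat_l; lra. }
    assert (S : A * ln (cosh (t * (lm * x1) + (1 - t) * (lm * y1)))
       < t * (A * ln (cosh (lm * x1))) + (1 - t) * (A * ln (cosh (lm * y1))) \/
       A * ln (cosh (t * (lm * (L - x2)) + (1 - t) * (lm * (L - y2))))
       < t * (A * ln (cosh (lm * (L - x2)))) + (1 - t) * (A * ln (cosh (lm * (L - y2))))).
    { destruct (Req_dec x1 y1) as [E1|E1].
      - right. assert (x2 <> y2) by (intro; apply Hne; subst; reflexivity).
        replace (t * (A * ln (cosh (lm * (L - x2)))) + (1 - t) * (A * ln (cosh (lm * (L - y2)))))
          with (A * (t * ln (cosh (lm * (L - x2))) + (1 - t) * ln (cosh (lm * (L - y2))))) by ring.
        apply Rmult_lt_compat_l; auto. apply lc_sc; auto.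
        intro E. apply H. apply Rmult_eq_reg_l in E; lra.
      - left.
        replace (t * (A * ln (cosh (lm * x1))) + (1 - t) * (A * ln (cosh (lm * y1))))
          with (A * (t * ln (cosh (lm * x1)) + (1 - t) * ln (cosh (lm * y1)))) by ring.
        apply Rmult_lt_compat_l; auto. apply lc_sc; auto.
        intro E. apply E1. apply Rmult_eq_reg_l in E; lra. }
    fold A. unfold B in D3. lra.
  - intros q1 q2 H1 H2 s t Hst.
    set (f := fun s => Ep L mp mm rhop rhom Sp Sm SI (q1 s) (q2 s)).
    change (f t <= f s).
    destruct (Rle_lt_or_eq_dec s t Hst) as [Hlt|Heq]; [|subst; lra].
    set (df := fun s => - H1p L mp mm rhop rhom Sp Sm SI (q1 s) (q2 s) * H1p L mp mm rhop rhom Sp Sm SI (q1 s) (q2 s)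
      - H2p L mp mm rhop rhom Sp Sm SI (q1 s) (q2 s) * H2p L mp mm rhop rhom Sp Sm SI (q1 s) (q2 s)).
    destruct (mvt_lt f df s t) as [c [Hc E]]; auto.
    + intro x. apply Ep_traj; auto.
    + assert (df c <= 0) by (unfold df; nra). nra.
Qed.
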